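(* Let $(t_1,s_1),(t_2,s_2)\in\mathbb{C}^\times\times\mathbb{C}^\times$ with $t_1\ne t_2$ and $s_1\neq s_2$, let $X_1=A_2(t_1,s_1)$, $X_2=A_2(t_2,s_2)$, let $\varepsilon_0=\det(X_1)+\det(X_2)-\det(X_1+X_2)$, and for $k\in\mathbb{N}$ let $\mathfrak{X}_k=(X_1X_2)^k+(X_2X_1)^k$. Then $\mathfrak{X}_1=\varepsilon_0 I_2$, $\mathfrak{X}_2=(\varepsilon_0^2-2)I_2$, and $\mathfrak{X}_n=\varepsilon_0\mathfrak{X}_{n-1}-\mathfrak{X}_{n-2}$ for all $n\ge3$.
   Context: $\mathbb{C}^\times=\mathbb{C}\setminus\{0\}$; $A_2(t,s)=\begin{pmatrix} t & s\\ \frac{1-t^2}{s} & -t\end{pmatrix}$; $I_2$ is the $2\times 2$ identity matrix. *)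

(* Defs.v *)
From mathcomp Require Import all_boot all_order all_algebra.
From mathcomp Require Import complex.
From mathcomp Require Import reals.
Set Implicit Arguments. Unset Strict Implicit. Unset Printing Implicit Defensive.
Import GRing.Theory Num.Theory.
Local Open Scope ring_scope.
Local Open Scope complex_scope.

Definition A2 (R : realType) (t s : R[i]) : 'M[R[i]]_2 :=
  \matrix_(i < 2, j < 2)
    (if (i == 0 :> nat) && (j == 0 :> nat) then t
     else if (i == 0 :> nat) then s
     else if (j == 0 :> nat) then (1 - t ^+ 2) / s
     else - t).

Definition eps0 (R : realType) (X1 X2 : 'M[R[i]]_2) : R[i] :=
  \det X1 + \det X2 - \det (X1 + X2).

Definition frakX (R : realType) (X1 X2 : 'M[R[i]]_2) (k : nat) : 'M[R[i]]_2 :=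
  (X1 *m X2) ^+ k + (X2 *m X1) ^+ k.

(* Main.v *)
Require Import Defs.
From mathcomp Require Import all_boot all_order all_algebra.
From mathcomp Require Import complex reals.
Import GRing.Theory Num.Theory.
Local Open Scope ring_scope.
Local Open Scope complex_scope.

Lemma det22 (F : comNzRingType) (A : 'M[F]_2) :
  \det A = A 0 0 * A 1 1 - A 0 1 * A 1 0.
Proof.
rewrite (expand_det_row _ 0) !big_ord_recl big_ord0 /cofactor !det_mx11 !mxE /=.
rewrite /bump /= expr0 expr1 mul1r mulN1r addr0 mulrN.
congr (_ * A _ _ - _ * A _ _).
all: try congr (A _ _); exact/eqP.
Qed.

From mathcomp Require Import ring.

Lemma A2sq (R : realType) (t s : R[i]) : s != 0 -> A2 t s *m A2 t s = 1.
Proof.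
move=> hs; apply/matrixP => i j; rewrite !mxE !big_ord_recl big_ord0 !mxE.
case: i => [[|[|i]]] //= Hi; case: j => [[|[|j]]] //= Hj; rewrite /=.
all: field; by rewrite ?hs ?h1 ?h2.
Qed.

Lemma A2sum (R : realType) (t1 s1 t2 s2 : R[i]) : s1 != 0 -> s2 != 0 ->
  A2 t1 s1 *m A2 t2 s2 + A2 t2 s2 *m A2 t1 s1 = (eps0 (A2 t1 s1) (A2 t2 s2))%:M.
Proof.
move=> h1 h2; rewrite /eps0 !det22; apply/matrixP => i j; rewrite !mxE !big_ord_recl big_ord0 !mxE.
case: i => [[|[|i]]] //= Hi; case: j => [[|[|j]]] //= Hj; rewrite /=.
all: rewrite ?big_ord0 ?mulr1n ?mulr0n; field; by rewrite ?h1 ?h2.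
Qed.

Lemma cheb (Rg : pzRingType) (P Q : Rg) : P * Q = 1 -> Q * P = 1 ->
  forall n, P ^+ n.+2 + Q ^+ n.+2 = (P + Q) * (P ^+ n.+1 + Q ^+ n.+1) - (P ^+ n + Q ^+ n).
Proof.
move=> hPQ hQP n.
have e1 : P * Q ^+ n.+1 = Q ^+ n by rewrite exprS mulrA hPQ mul1r.
have e2 : Q * P ^+ n.+1 = P ^+ n by rewrite exprS mulrA hQP mul1r.
rewrite mulrDl !mulrDr e1 e2 -!exprS.
move: (P ^+ n.+2) (Q ^+ n.+2) (P ^+ n) (Q ^+ n) => a b c d.
by rewrite (addrC c b) addrACA (addrC d c) addrK.
Qed.

Theorem mainTheorem8 (R : realType) (t1 s1 t2 s2 : R[i]) :
  t1 != 0 -> s1 != 0 -> t2 != 0 -> s2 != 0 ->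
  t1 != t2 -> s1 != s2 ->
  let X1 := A2 t1 s1 in
  let X2 := A2 t2 s2 in
  let e := eps0 X1 X2 in
  [/\ frakX X1 X2 1 = e%:M,
      frakX X1 X2 2 = (e ^+ 2 - 2)%:M &
      forall n : nat, (3 <= n)%N ->
        frakX X1 X2 n = e *: frakX X1 X2 n.-1 - frakX X1 X2 n.-2].
Proof.
move=> _ h1 _ h2 _ _ X1 X2 e.
have hs := @A2sum R t1 s1 t2 s2 h1 h2.
have sq1 := @A2sq R t1 s1 h1. have sq2 := @A2sq R t2 s2 h2.
have hPQ : (X1 *m X2) * (X2 *m X1) = 1.
  by rewrite [_ * _]mulmxA -(mulmxA X1 X2 X2) sq2 mulmx1 sq1.
have hQP : (X2 *m X1) * (X1 *m X2) = 1.
  by rewrite [_ * _]mulmxA -(mulmxA X2 X1 X1) sq1 mulmx1 sq2.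
have hc := cheb _ _ _ hPQ hQP.
have {}hs : X1 *m X2 + X2 *m X1 = e%:M := hs.
clearbody e X1 X2.
rewrite /frakX; split.
- by rewrite !expr1.
- rewrite hc !expr1 !expr0 hs.
  rewrite expr2 rmorphB rmorphM /=.
congr (_ - _); by rewrite raddfMn /= rmorph1.
- case=> [|[|m]] // _ /=.
  by rewrite hc hs [_ * _]mul_scalar_mx.
Qed.
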